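(* The lattice $L=U+A_2+2E_8+A_1$ is achiral, i.e., for some cell $P$ of $\Lambda(L)$ there is an automorphism $g$ of $L$ with $g(P)=P$ which is $P$-reversing and $\mathbb{Z}/3$-direct.
   Context: $U$ has Gram matrix $\begin{pmatrix}0&1\\1&0\end{pmatrix}$; $A_1,A_2,E_8$ are positive definite root lattices; $+$ denotes orthogonal sum. For $L$: $V_k=\{v\in L:v^2=k,\ 2vw/v^2\in\mathbb{Z}\ \forall w\in L\}$ ($k=2,6$); $\Lambda(L)=\{x\in L\otimes\mathbb{R}:x^2<0\}/\mathbb{R}^*$; cells are closures of components of the complement of the hyperplanes $v^\perp$, $v\in V_2\cup V_6$. A cell $P$ lifts to two opposite pieces $\pm P^\sharp$ in $\{x^2<0\}/\mathbb{R}_{>0}$; $g$ with $g(P)=P$ is $P$-reversing if $g(P^\sharp)=-P^\sharp$. $g$ is $\mathbb{Z}/3$-direct if it acts trivially on the $3$-primary part ($\cong\mathbb{Z}/3$) of the discriminant group $L^*/L$. *)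

(* Defs.v *)
From HB Require Import structures.
From mathcomp Require Import all_boot all_order all_algebra.
From mathcomp Require Import all_classical all_reals all_analysis.
Set Implicit Arguments. Unset Strict Implicit. Unset Printing Implicit Defensive.
Import Order.TTheory GRing.Theory Num.Theory.
Import numFieldNormedType.Exports.
Local Open Scope ring_scope.
Local Open Scope classical_set_scope.

(* L = U + A_2 + 2E_8 + A_1 realised as Z^21 (row vectors) with Gram matrix
   gramL. Index layout: 0,1 : U ; 2,3 : A_2 ; 4..11 : E_8 ; 12..19 : E_8 ;
   20 : A_1. *)
Definition rkL := 21%N.

(* E_8 Cartan matrix, local indices 0..7 (Bourbaki labels 1..8 shifted):
   chain 0-2-3-4-5-6-7 and 1-3. *)
Definition e8_edge (a b : nat) : bool :=
  (a, b) \in [:: (0%N,2%N); (2%N,3%N); (3%N,4%N); (4%N,5%N); (5%N,6%N); (6%N,7%N); (1%N,3%N)].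

Definition e8 (a b : nat) : int :=
  if a == b then (2 : int) else if e8_edge a b || e8_edge b a then (-1 : int) else (0 : int).

Definition gram_entry (i j : nat) : int :=
  if (i < 2)%N && (j < 2)%N then (if i == j then (0 : int) else (1 : int))
  else if [&& (2 <= i < 4)%N & (2 <= j < 4)%N]
       then (if i == j then (2 : int) else (-1 : int))
  else if [&& (4 <= i < 12)%N & (4 <= j < 12)%N] then e8 (i - 4) (j - 4)
  else if [&& (12 <= i < 20)%N & (12 <= j < 20)%N]
       then e8 (i - 12) (j - 12)
  else if (i == 20%N) && (j == 20%N) then (2 : int)
  else (0 : int).

Definition gramL : 'M[int]_rkL := \matrix_(i < rkL, j < rkL) gram_entry i j.

Definition bL (v w : 'rV[int]_rkL) : int := (v *m gramL *m w^T) 0 0.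

Definition Vk (k : int) : set 'rV[int]_rkL :=
  [set v | bL v v = k /\ forall w, (k %| 2 * bL v w)%Z].

Definition bR (R : realType) (x y : 'rV[R]_rkL) : R :=
  (x *m map_mx intr gramL *m y^T) 0 0.

Definition negcone (R : realType) : set 'rV[R]_rkL := [set x | bR x x < 0].

Definition walls (R : realType) : set 'rV[R]_rkL :=
  [set x | exists v, (Vk 2 v \/ Vk 6 v) /\ bR (map_mx intr v) x = 0].

Definition is_chamber (R : realType) (C : set 'rV[R]_rkL) : Prop :=
  exists2 x, (@negcone R `\` @walls R) x &
             C = connected_component (@negcone R `\` @walls R) x.

(* the lift P# of the cell P = closure of the image of C: closure of C taken
   inside the cone {x^2<0} *)
Definition lift_cell (R : realType) (C : set 'rV[R]_rkL) : set 'rV[R]_rkL :=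
  closure C `&` @negcone R.

(* automorphisms of L (acting on row vectors on the right: x |-> x g) *)
Definition isAutL (g : 'M[int]_rkL) : Prop :=
  g \in unitmx /\ g *m gramL *m g^T = gramL.

Definition act_R (R : realType) (g : 'M[int]_rkL) (S : set 'rV[R]_rkL) :
  set 'rV[R]_rkL := (fun x => x *m map_mx intr g) @` S.

Definition neg_set (R : realType) (S : set 'rV[R]_rkL) : set 'rV[R]_rkL :=
  (fun x => - x) @` S.

(* Z/3-direct: trivial action on the 3-primary part of L^* / L *)
Definition is_int_rat (q : rat) : bool := denq q == 1.
Definition in_L (y : 'rV[rat]_rkL) : Prop := forall i, is_int_rat (y 0 i).
Definition in_dualL (y : 'rV[rat]_rkL) : Prop :=
  in_L (y *m map_mx intr gramL).

Definition Z3_direct (g : 'M[int]_rkL) : Prop :=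
  forall y : 'rV[rat]_rkL, in_dualL y ->
    (exists k : nat, in_L ((3%:R ^+ k) *: y)) ->
    in_L (y *m map_mx intr g - y).

(* Main.v *)
Require Import Defs.
From HB Require Import structures.
From mathcomp Require Import all_boot all_order all_algebra.
From mathcomp Require Import all_classical all_reals all_analysis.
From mathcomp Require Import zify ring lra.
Import Order.TTheory GRing.Theory Num.Theory.
Import numFieldNormedType.Exports.
Local Open Scope ring_scope.

Definition qf (a b c d e f : int) : int :=
  4*a^+2 + 6*b^+2 + 10*c^+2 + 18*d^+2 + 10*e^+2 + 4*f^+2 +
  2*(3*a*b + 5*a*c + 6*a*d + 4*a*e + 2*a*f + 6*b*c + 9*b*d + 6*b*e + 3*b*f
     + 12*c*d + 8*c*e + 4*c*f + 12*d*e + 6*d*f + 5*e*f).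

Lemma sos6 (K X c1 c2 c3 c4 c5 c6 s1 s2 s3 s4 s5 s6 : int) :
  0 < K -> 0 <= c1 -> 0 <= c2 -> 0 <= c3 -> 0 <= c4 -> 0 <= c5 -> 0 <= c6 ->
  K * X = c1 * s1^+2 + c2 * s2^+2 + c3 * s3^+2 + c4 * s4^+2 + c5 * s5^+2 + c6 * s6^+2 ->
  0 <= X.
Proof.
move=> K0 h1 h2 h3 h4 h5 h6 E.
have : 0 <= K * X by rewrite E !addr_ge0 // mulr_ge0 // sqr_ge0.
by rewrite pmulr_rge0.
Qed.

Lemma qf_ge0 a b c d e f : 0 <= qf a b c d e f.
Proof.
apply: (@sos6 20 _ 5 3 3 5 10 30 (4*a+3*b+5*c+6*d+4*e+2*f) (5*b+3*c+6*d+4*e+2*f)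
  (4*c+3*d+2*e+f) (3*d+2*e+f) (2*e+f) f) => //.
rewrite /qf; ring.
Qed.

Lemma qf_bound a b c d e f :
  (0 <= 2*qf a b c d e f - 3*a^+2) /\ (0 <= 2*qf a b c d e f - 3*b^+2) /\
      (0 <= 2*qf a b c d e f - 3*c^+2) /\ (0 <= 2*qf a b c d e f - 3*d^+2) /\
      (0 <= 2*qf a b c d e f - 3*e^+2) /\ (0 <= 2*qf a b c d e f - 3*f^+2).
Proof.
pose L1 := 4*a+3*b+5*c+6*d+4*e+2*f.
pose L2 := 5*b+3*c+6*d+4*e+2*f.
pose L3 := 4*c+3*d+2*e+f.
pose L4 := 3*d+2*e+f.
split; [|split; [|split; [|split; [|split]]]].
- apply: (@sos6 10 _ 2 3 5 10 30 0 (5*a+6*b+10*c+12*d+8*e+4*f) (4*b+3*d+2*e+f)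
    L4 (2*e+f) f 0) => //; rewrite /qf /L4; ring.
- apply: (@sos6 2 _ 1 1 6 2 6 0 L1 (3*b+3*c+6*d+4*e+2*f) c (2*e+f) f 0) => //;
    rewrite /qf /L1; ring.
- apply: (@sos6 10 _ 5 3 2 10 30 0 L1 L2 (3*c+6*d+4*e+2*f) (2*e+f) f 0) => //;
    rewrite /qf /L1 /L2; ring.
- apply: (@sos6 10 _ 5 3 3 15 30 0 L1 L2 L3 (d+2*e+f) f 0) => //;
    rewrite /qf /L1 /L2 /L3; ring.
- apply: (@sos6 10 _ 5 3 3 5 10 0 L1 L2 L3 L4 (e+2*f) 0) => //;
    rewrite /qf /L1 /L2 /L3 /L4; ring.
- apply: (@sos6 10 _ 5 3 3 5 10 0 L1 L2 L3 L4 (2*e+f) 0) => //;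
    rewrite /qf /L1 /L2 /L3 /L4; ring.
Qed.

Lemma qf_even a b c d e f : qf a b c d e f = 2 * (2*a^+2 + 3*b^+2 + 5*c^+2 + 9*d^+2 + 5*e^+2 + 2*f^+2 +
  (3*a*b + 5*a*c + 6*a*d + 4*a*e + 2*a*f + 6*b*c + 9*b*d + 6*b*e + 3*b*f
     + 12*c*d + 8*c*e + 4*c*f + 12*d*e + 6*d*f + 5*e*f)).
Proof. rewrite /qf; ring. Qed.
Definition Psi (a1 a2 a3 a4 a5 a6 b1 b2 b3 b4 b5 b6 c1 c2 c3 c4 c5 c6 z : int) :=
  2 * qf a1 a2 a3 a4 a5 a6 + 2 * qf b1 b2 b3 b4 b5 b6 + 2 * qf c1 c2 c3 c4 c5 c6 + 3 * z^+2.

(* E6 Cartan times vector (symmetric) *)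
Definition cart1 (x1 x2 x3 x4 x5 x6 : int) := 2*x1 - x3.
Definition cart2 (x1 x2 x3 x4 x5 x6 : int) := 2*x2 - x4.
Definition cart3 (x1 x2 x3 x4 x5 x6 : int) := -x1 + 2*x3 - x4.
Definition cart4 (x1 x2 x3 x4 x5 x6 : int) := -x2 - x3 + 2*x4 - x5.
Definition cart5 (x1 x2 x3 x4 x5 x6 : int) := -x4 + 2*x5 - x6.
Definition cart6 (x1 x2 x3 x4 x5 x6 : int) := -x5 + 2*x6.

Lemma sq_small (x : int) : x^+2 <= 12 -> -3 <= x <= 3.
Proof. move=> h. nia. Qed.



Lemma Psi_ge0 a1 a2 a3 a4 a5 a6 b1 b2 b3 b4 b5 b6 c1 c2 c3 c4 c5 c6 z :
  0 <= Psi a1 a2 a3 a4 a5 a6 b1 b2 b3 b4 b5 b6 c1 c2 c3 c4 c5 c6 z.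
Proof.
rewrite /Psi; apply: addr_ge0; last by rewrite mulr_ge0 // sqr_ge0.
by rewrite !addr_ge0 // mulr_ge0 // qf_ge0.
Qed.
Definition ell (W a1 a2 a3 a4 a5 a6 b1 b2 b3 b4 b5 b6 c1 c2 c3 c4 c5 c6 z : int) :=
  z + W*a1 + W^+2*a2 + W^+3*a3 + W^+4*a4 + W^+5*a5 + W^+6*a6
         + W^+7*(b1+c1) + W^+8*(b2+c2) + W^+9*(b3+c3) + W^+10*(b4+c4)
         + W^+11*(b5+c5) + W^+12*(b6+c6).

Definition PsiN (W : int) :=
  Psi (cart1 W (W^+2) (W^+3) (W^+4) (W^+5) (W^+6)) (cart2 W (W^+2) (W^+3) (W^+4) (W^+5) (W^+6))
      (cart3 W (W^+2) (W^+3) (W^+4) (W^+5) (W^+6)) (cart4 W (W^+2) (W^+3) (W^+4) (W^+5) (W^+6))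
      (cart5 W (W^+2) (W^+3) (W^+4) (W^+5) (W^+6)) (cart6 W (W^+2) (W^+3) (W^+4) (W^+5) (W^+6))
      (cart1 (W^+7) (W^+8) (W^+9) (W^+10) (W^+11) (W^+12)) (cart2 (W^+7) (W^+8) (W^+9) (W^+10) (W^+11) (W^+12))
      (cart3 (W^+7) (W^+8) (W^+9) (W^+10) (W^+11) (W^+12)) (cart4 (W^+7) (W^+8) (W^+9) (W^+10) (W^+11) (W^+12))
      (cart5 (W^+7) (W^+8) (W^+9) (W^+10) (W^+11) (W^+12)) (cart6 (W^+7) (W^+8) (W^+9) (W^+10) (W^+11) (W^+12))
      (cart1 (W^+7) (W^+8) (W^+9) (W^+10) (W^+11) (W^+12)) (cart2 (W^+7) (W^+8) (W^+9) (W^+10) (W^+11) (W^+12))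
      (cart3 (W^+7) (W^+8) (W^+9) (W^+10) (W^+11) (W^+12)) (cart4 (W^+7) (W^+8) (W^+9) (W^+10) (W^+11) (W^+12))
      (cart5 (W^+7) (W^+8) (W^+9) (W^+10) (W^+11) (W^+12)) (cart6 (W^+7) (W^+8) (W^+9) (W^+10) (W^+11) (W^+12))
      2.

Lemma psi_shift_ge0 (W D p0 a1 a2 a3 a4 a5 a6 b1 b2 b3 b4 b5 b6 c1 c2 c3 c4 c5 c6 z : int) :
  0 <= D^+2 * Psi a1 a2 a3 a4 a5 a6 b1 b2 b3 b4 b5 b6 c1 c2 c3 c4 c5 c6 z
    - 12 * D * p0 * ell W a1 a2 a3 a4 a5 a6 b1 b2 b3 b4 b5 b6 c1 c2 c3 c4 c5 c6 z
    + p0^+2 * PsiN W.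
Proof.
have := Psi_ge0 (D*a1 - p0 * cart1 W (W^+2) (W^+3) (W^+4) (W^+5) (W^+6)) (D*a2 - p0 * cart2 W (W^+2) (W^+3) (W^+4) (W^+5) (W^+6))
      (D*a3 - p0 * cart3 W (W^+2) (W^+3) (W^+4) (W^+5) (W^+6)) (D*a4 - p0 * cart4 W (W^+2) (W^+3) (W^+4) (W^+5) (W^+6))
      (D*a5 - p0 * cart5 W (W^+2) (W^+3) (W^+4) (W^+5) (W^+6)) (D*a6 - p0 * cart6 W (W^+2) (W^+3) (W^+4) (W^+5) (W^+6))
      (D*b1 - p0 * cart1 (W^+7) (W^+8) (W^+9) (W^+10) (W^+11) (W^+12)) (D*b2 - p0 * cart2 (W^+7) (W^+8) (W^+9) (W^+10) (W^+11) (W^+12))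
      (D*b3 - p0 * cart3 (W^+7) (W^+8) (W^+9) (W^+10) (W^+11) (W^+12)) (D*b4 - p0 * cart4 (W^+7) (W^+8) (W^+9) (W^+10) (W^+11) (W^+12))
      (D*b5 - p0 * cart5 (W^+7) (W^+8) (W^+9) (W^+10) (W^+11) (W^+12)) (D*b6 - p0 * cart6 (W^+7) (W^+8) (W^+9) (W^+10) (W^+11) (W^+12))
      (D*c1 - p0 * cart1 (W^+7) (W^+8) (W^+9) (W^+10) (W^+11) (W^+12)) (D*c2 - p0 * cart2 (W^+7) (W^+8) (W^+9) (W^+10) (W^+11) (W^+12))
      (D*c3 - p0 * cart3 (W^+7) (W^+8) (W^+9) (W^+10) (W^+11) (W^+12)) (D*c4 - p0 * cart4 (W^+7) (W^+8) (W^+9) (W^+10) (W^+11) (W^+12))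
      (D*c5 - p0 * cart5 (W^+7) (W^+8) (W^+9) (W^+10) (W^+11) (W^+12)) (D*c6 - p0 * cart6 (W^+7) (W^+8) (W^+9) (W^+10) (W^+11) (W^+12))
      (D*z - p0 * 2).
congr (_ <= _).
rewrite /PsiN /ell /Psi /qf /cart1 /cart2 /cart3 /cart4 /cart5 /cart6.
Time ring.
Qed.

Definition Wc : int := 13.
Definition Dc : int := Wc ^+ 13.

Lemma Psin_small : 0 <= PsiN Wc /\ PsiN Wc * 4 < Dc ^+ 2.
Proof. rewrite /PsiN /Psi /qf /cart1 /cart2 /cart3 /cart4 /cart5 /cart6 /Dc /Wc. Time lia. Qed.

Lemma digit (x R : int) : x + 13 * R = 0 -> -6 <= x <= 6 -> x = 0 /\ R = 0.
Proof. move=> h1 h2; lia. Qed.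
Lemma step_a (D P p0 p1 k Ps l : int) : (k = 2 \/ k = 6) -> 0 < D -> 0 <= P -> P * 4 < D^+2 ->
  6 * k = 12 * p0 * p1 + Ps -> -4 * D * p0 + D * p1 + l = 0 ->
  0 <= D^+2 * Ps - 12 * D * p0 * l + p0^+2 * P -> p0 = 0.
Proof.
move=> hk D0 P0 P1 hN hL hge.
have hl : l = 4 * D * p0 - D * p1.
  by apply/eqP; rewrite -subr_eq0; apply/eqP; rewrite -[RHS]hL; ring.
have e : D^+2 * Ps - 12 * D * p0 * l + p0^+2 * P
         = D^+2 * (6*k) + p0^+2 * (P - 48 * D^+2).
  by rewrite hl; apply/eqP; rewrite -subr_eq0; apply/eqP;
     rewrite (_ : Ps = 6 * k - 12 * p0 * p1); [ring| rewrite hN; ring].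
rewrite e in hge.
have [//|p0n] := eqVneq p0 0.
have s1 : 1 <= p0^+2 by nia.
move: hge P1 s1; clear -hk D0 P0.
set DD := D^+2; set s := p0^+2 => hge P1 s1.
have DD0 : 0 < DD by rewrite /DD exprn_gt0.
exfalso.
have h1 : 48 * DD - P <= s * (48 * DD - P) by rewrite ler_peMl //; lia.
case: hk => hk; rewrite hk in hge; lia.
Qed.

Lemma ell_horner (W a1 a2 a3 a4 a5 a6 b1 b2 b3 b4 b5 b6 c1 c2 c3 c4 c5 c6 z : int) :
  ell W a1 a2 a3 a4 a5 a6 b1 b2 b3 b4 b5 b6 c1 c2 c3 c4 c5 c6 z =
  z + W*(a1 + W*(a2 + W*(a3 + W*(a4 + W*(a5 + W*(a6 + W*((b1+c1) + W*((b2+c2)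
    + W*((b3+c3) + W*((b4+c4) + W*((b5+c5) + W*(b6+c6)))))))))))).
Proof. rewrite /ell; ring. Qed.

Lemma bnd (x q Ps : int) : 0 <= 2*q - 3*x^+2 -> 2*q <= Ps -> Ps <= 36 -> -3 <= x <= 3.
Proof. move=> h1 h2 h3; apply: sq_small; lia. Qed.

Lemma Dc_gt0 : 0 < Dc.
Proof. rewrite /Dc /Wc; exact: exprn_gt0. Qed.
Lemma Dc_val : Dc = 13 ^+ 13. Proof. by []. Qed.
Opaque Dc.


Lemma quot_small (D p E : int) : 0 < D -> D * p + E = 0 -> - D < E < D -> p = 0 /\ E = 0.
Proof.
move=> D0 h1 h2.
have hE : E = - (D * p) by apply/eqP; rewrite -addr_eq0 addrC h1.
have [hp|hp|hp] := ltrgtP p 0.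
- have : D <= D * - p by rewrite ler_peMr //; lia.
  lia.
- have : D <= D * p by rewrite ler_peMr //; lia.
  lia.
- by rewrite hp mulr0 oppr0 in hE.
Qed.

Lemma w6 (x y : int) : -3 <= x <= 3 -> -3 <= y <= 3 -> -6 <= x + y <= 6.
Proof. move=> h1 h2; lia. Qed.

Lemma w6' (x : int) : -3 <= x <= 3 -> -6 <= x <= 6.
Proof. move=> h1; lia. Qed.

Lemma finish (k b1 b2 b3 b4 b5 b6 : int) : (k = 2 \/ k = 6) ->
  2 * qf 0 0 0 0 0 0 + 2 * qf b1 b2 b3 b4 b5 b6 + 2 * qf (-b1) (-b2) (-b3) (-b4) (-b5) (-b6)
  + 3 * 0^+2 = 6 * k -> False.
Proof.
move=> hk h.
have e : 2 * qf 0 0 0 0 0 0 + 2 * qf b1 b2 b3 b4 b5 b6 + 2 * qf (-b1) (-b2) (-b3) (-b4) (-b5) (-b6)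
  + 3 * 0^+2 = 4 * qf b1 b2 b3 b4 b5 b6 by rewrite /qf; ring.
rewrite e qf_even in h.
move: h; set r := (X in 2 * X); move=> h.
case: hk => hk; rewrite hk in h; lia.
Qed.

Theorem core (k p0 p1 a1 a2 a3 a4 a5 a6 b1 b2 b3 b4 b5 b6 c1 c2 c3 c4 c5 c6 z : int) :
  (k = 2 \/ k = 6) ->
  6 * k = 12 * p0 * p1 + Psi a1 a2 a3 a4 a5 a6 b1 b2 b3 b4 b5 b6 c1 c2 c3 c4 c5 c6 z ->
  - 4 * Dc * p0 + Dc * p1 + ell Wc a1 a2 a3 a4 a5 a6 b1 b2 b3 b4 b5 b6 c1 c2 c3 c4 c5 c6 z = 0 ->
  False.
Proof.
move=> hk hN hL.
have hge := psi_shift_ge0 Wc Dc p0 a1 a2 a3 a4 a5 a6 b1 b2 b3 b4 b5 b6 c1 c2 c3 c4 c5 c6 z.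
have [Pn0 Pn1] := Psin_small.
have D0 := Dc_gt0.
have hp0 := step_a Dc (PsiN Wc) p0 p1 k _ _ hk D0 Pn0 Pn1 hN hL hge.
subst p0. clear hge Pn0 Pn1.
have hPs : Psi a1 a2 a3 a4 a5 a6 b1 b2 b3 b4 b5 b6 c1 c2 c3 c4 c5 c6 z = 6 * k.
  by rewrite hN mulr0 mul0r add0r.
clear hN.
move: hPs; rewrite /Psi => hPs.
have qa := qf_ge0 a1 a2 a3 a4 a5 a6.
have qb := qf_ge0 b1 b2 b3 b4 b5 b6.
have qc := qf_ge0 c1 c2 c3 c4 c5 c6.
have z2 := sqr_ge0 z.
set Qa := qf a1 a2 a3 a4 a5 a6 in hPs qa.
set Qb := qf b1 b2 b3 b4 b5 b6 in hPs qb.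
set Qc := qf c1 c2 c3 c4 c5 c6 in hPs qc.
have hPs36 : 2*Qa + 2*Qb + 2*Qc + 3*z^+2 <= 36 by rewrite hPs; case: hk => ->.
have ba : 2*Qa <= 36 by lia.
have bb : 2*Qb <= 36 by lia.
have bc : 2*Qc <= 36 by lia.
have bz : -3 <= z <= 3 by apply: sq_small; lia.
have [ba1 [ba2 [ba3 [ba4 [ba5 ba6]]]]] := qf_bound a1 a2 a3 a4 a5 a6.
have [bb1 [bb2 [bb3 [bb4 [bb5 bb6]]]]] := qf_bound b1 b2 b3 b4 b5 b6.
have [bc1 [bc2 [bc3 [bc4 [bc5 bc6]]]]] := qf_bound c1 c2 c3 c4 c5 c6.
rewrite -/Qa in ba1 ba2 ba3 ba4 ba5 ba6.
rewrite -/Qb in bb1 bb2 bb3 bb4 bb5 bb6.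
rewrite -/Qc in bc1 bc2 bc3 bc4 bc5 bc6.
have ha1 := bnd _ _ _ ba1 ba (lexx 36).
have ha2 := bnd _ _ _ ba2 ba (lexx 36).
have ha3 := bnd _ _ _ ba3 ba (lexx 36).
have ha4 := bnd _ _ _ ba4 ba (lexx 36).
have ha5 := bnd _ _ _ ba5 ba (lexx 36).
have ha6 := bnd _ _ _ ba6 ba (lexx 36).
have hb1 := bnd _ _ _ bb1 bb (lexx 36).
have hb2 := bnd _ _ _ bb2 bb (lexx 36).
have hb3 := bnd _ _ _ bb3 bb (lexx 36).
have hb4 := bnd _ _ _ bb4 bb (lexx 36).
have hb5 := bnd _ _ _ bb5 bb (lexx 36).
have hb6 := bnd _ _ _ bb6 bb (lexx 36).
have hc1 := bnd _ _ _ bc1 bc (lexx 36).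
have hc2 := bnd _ _ _ bc2 bc (lexx 36).
have hc3 := bnd _ _ _ bc3 bc (lexx 36).
have hc4 := bnd _ _ _ bc4 bc (lexx 36).
have hc5 := bnd _ _ _ bc5 bc (lexx 36).
have hc6 := bnd _ _ _ bc6 bc (lexx 36).
move: hL; rewrite ell_horner (mulr0 (-4 * Dc)) (add0r (Dc * p1)) /Wc => hL.
move: (hL).
set E := (z + _) => hE.
have bE : - Dc < E < Dc.
  move: ha1 ha2 ha3 ha4 ha5 ha6 hb1 hb2 hb3 hb4 hb5 hb6 hc1 hc2 hc3 hc4 hc5 hc6 bz.
  rewrite /E Dc_val; clear; move=> *; lia.
have [_ E0] := quot_small Dc p1 E D0 hE bE.
move: E0; rewrite /E => E0.
have [z0 R] := digit _ _ E0 (w6' _ bz).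
have [a10 {}R] := digit _ _ R (w6' _ ha1).
have [a20 {}R] := digit _ _ R (w6' _ ha2).
have [a30 {}R] := digit _ _ R (w6' _ ha3).
have [a40 {}R] := digit _ _ R (w6' _ ha4).
have [a50 {}R] := digit _ _ R (w6' _ ha5).
have [a60 {}R] := digit _ _ R (w6' _ ha6).
have [e1 {}R] := digit _ _ R (w6 _ _ hb1 hc1).
have [e2 {}R] := digit _ _ R (w6 _ _ hb2 hc2).
have [e3 {}R] := digit _ _ R (w6 _ _ hb3 hc3).
have [e4 {}R] := digit _ _ R (w6 _ _ hb4 hc4).
have [e5 {}R] := digit _ _ R (w6 _ _ hb5 hc5).
have e6 : b6 + c6 = 0 := R.
have c1e : c1 = - b1 by apply/eqP; rewrite -addr_eq0 addrC e1.
have c2e : c2 = - b2 by apply/eqP; rewrite -addr_eq0 addrC e2.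
have c3e : c3 = - b3 by apply/eqP; rewrite -addr_eq0 addrC e3.
have c4e : c4 = - b4 by apply/eqP; rewrite -addr_eq0 addrC e4.
have c5e : c5 = - b5 by apply/eqP; rewrite -addr_eq0 addrC e5.
have c6e : c6 = - b6 by apply/eqP; rewrite -addr_eq0 addrC e6.
move: hPs; rewrite /Qa /Qb /Qc z0 a10 a20 a30 a40 a50 a60 c1e c2e c3e c4e c5e c6e.
exact: finish hk.
Qed.

Definition gL : seq (seq int) :=
 [:: [:: (-13); 12; 8; 4; (-6); (-9); (-12); (-18); (-15); (-12); (-12); 0; (-6); (-9); (-12); (-18); (-15); (-12); (-12); 0; 0];
  [:: 12; (-13); (-8); (-4); 6; 9; 12; 18; 15; 12; 12; 0; 6; 9; 12; 18; 15; 12; 12; 0; 0];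
  [:: (-12); 12; 7; 4; (-6); (-9); (-12); (-18); (-15); (-12); (-12); 0; (-6); (-9); (-12); (-18); (-15); (-12); (-12); 0; 0];
  [:: 0; 0; 0; (-1); 0; 0; 0; 0; 0; 0; 0; 0; 0; 0; 0; 0; 0; 0; 0; 0; 0];
  [:: 0; 0; 0; 0; 0; 0; 0; 0; 0; 0; 0; 0; (-1); 0; 0; 0; 0; 0; 0; 0; 0];
  [:: 0; 0; 0; 0; 0; 0; 0; 0; 0; 0; 0; 0; 0; 0; 0; 0; (-1); 0; 0; 0; 0];
  [:: 0; 0; 0; 0; 0; 0; 0; 0; 0; 0; 0; 0; 0; 0; (-1); 0; 0; 0; 0; 0; 0];
  [:: 0; 0; 0; 0; 0; 0; 0; 0; 0; 0; 0; 0; 0; 0; 0; (-1); 0; 0; 0; 0; 0];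
  [:: 0; 0; 0; 0; 0; 0; 0; 0; 0; 0; 0; 0; 0; (-1); 0; 0; 0; 0; 0; 0; 0];
  [:: (-3); 3; 2; 1; (-2); (-3); (-4); (-6); (-5); (-4); (-3); 0; (-1); (-1); (-2); (-3); (-3); (-3); (-3); 0; 0];
  [:: 12; (-12); (-8); (-4); 6; 9; 12; 18; 15; 12; 11; 0; 6; 9; 12; 18; 15; 12; 12; 0; 0];
  [:: (-12); 12; 8; 4; (-6); (-9); (-12); (-18); (-15); (-12); (-12); (-1); (-6); (-9); (-12); (-18); (-15); (-12); (-12); 0; 0];
  [:: 0; 0; 0; 0; (-1); 0; 0; 0; 0; 0; 0; 0; 0; 0; 0; 0; 0; 0; 0; 0; 0];
  [:: 0; 0; 0; 0; 0; 0; 0; 0; (-1); 0; 0; 0; 0; 0; 0; 0; 0; 0; 0; 0; 0];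
  [:: 0; 0; 0; 0; 0; 0; (-1); 0; 0; 0; 0; 0; 0; 0; 0; 0; 0; 0; 0; 0; 0];
  [:: 0; 0; 0; 0; 0; 0; 0; (-1); 0; 0; 0; 0; 0; 0; 0; 0; 0; 0; 0; 0; 0];
  [:: 0; 0; 0; 0; 0; (-1); 0; 0; 0; 0; 0; 0; 0; 0; 0; 0; 0; 0; 0; 0; 0];
  [:: (-3); 3; 2; 1; (-1); (-1); (-2); (-3); (-3); (-3); (-3); 0; (-2); (-3); (-4); (-6); (-5); (-4); (-3); 0; 0];
  [:: 12; (-12); (-8); (-4); 6; 9; 12; 18; 15; 12; 12; 0; 6; 9; 12; 18; 15; 12; 11; 0; 0];
  [:: (-12); 12; 8; 4; (-6); (-9); (-12); (-18); (-15); (-12); (-12); 0; (-6); (-9); (-12); (-18); (-15); (-12); (-12); (-1); 0];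
  [:: 0; 0; 0; 0; 0; 0; 0; 0; 0; 0; 0; 0; 0; 0; 0; 0; 0; 0; 0; 0; (-1)]].

Definition SL : seq (seq int) :=
 [:: [:: (-3); 3; 2; 1; (-2); (-3); (-4); (-6); (-5); (-4); (-3); 0; (-2); (-3); (-4); (-6); (-5); (-4); (-3); 0; 0];
  [:: 18; (-18); (-11); (-6); 12; 18; 24; 36; 30; 24; 20; 0; 12; 18; 24; 36; 30; 24; 17; 0; 0];
  [:: 4; (-4); (-2); (-1); 2; 3; 4; 6; 5; 4; 3; (-1); 2; 3; 4; 6; 5; 4; 3; (-1); 0];
  [:: 1; (-2); (-1); (-1); 0; 0; 0; 0; 0; 0; 0; (-1); 2; 3; 4; 6; 5; 4; 3; 1; 0];
  [:: (-2); 1; 1; 1; 0; 0; 0; 0; 0; 0; 0; 1; 0; 0; 0; 0; 0; 0; 0; 1; 0];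
  [:: 1; 1; 0; 0; 0; 0; 0; 0; 0; 0; 0; 0; 0; 0; 0; 0; 0; 0; 0; 0; 0];
  [:: 2; (-3); (-2); (-1); 2; 3; 4; 6; 5; 4; 3; 0; 0; 0; 0; 0; 0; 0; 0; (-1); 0];
  [:: (-1); 1; 1; 0; 0; 0; 0; 0; 0; 0; 0; 1; 0; 0; 0; 0; 0; 0; 0; 0; 0];
  [:: 3; (-3); (-2); (-1); 2; 3; 4; 6; 5; 4; 3; 0; 2; 3; 4; 6; 5; 5; 3; 0; 0];
  [:: 0; 0; 0; 0; 0; 0; 0; 0; 0; 0; 0; 0; 0; 1; 0; 0; 0; 0; 0; 0; 0];
  [:: 0; 0; 0; 0; 0; 0; 0; 0; 0; 0; 0; 0; 0; 0; 0; 0; 1; 0; 0; 0; 0];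
  [:: 0; 0; 0; 0; 0; 0; 0; 0; 0; 0; 0; 0; 0; 0; 0; 1; 0; 0; 0; 0; 0];
  [:: 0; 0; 0; 0; 0; 0; 0; 0; 0; 0; 0; 0; 0; 0; 1; 0; 0; 0; 0; 0; 0];
  [:: 0; 0; 0; 0; 0; 0; 0; 0; 0; 0; 0; 0; 1; 0; 0; 0; 0; 0; 0; 0; 0];
  [:: 6; (-6); (-4); (-2); 3; 4; 6; 9; 8; 7; 6; 0; 4; 6; 8; 12; 10; 8; 6; 0; 0];
  [:: 0; 0; 0; 0; 0; 0; 0; 0; 1; 0; 0; 0; 0; 0; 0; 0; 0; 0; 0; 0; 0];
  [:: 0; 0; 0; 0; 0; 1; 0; 0; 0; 0; 0; 0; 0; 0; 0; 0; 0; 0; 0; 0; 0];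
  [:: 0; 0; 0; 0; 0; 0; 0; 1; 0; 0; 0; 0; 0; 0; 0; 0; 0; 0; 0; 0; 0];
  [:: 0; 0; 0; 0; 0; 0; 1; 0; 0; 0; 0; 0; 0; 0; 0; 0; 0; 0; 0; 0; 0];
  [:: 0; 0; 0; 0; 1; 0; 0; 0; 0; 0; 0; 0; 0; 0; 0; 0; 0; 0; 0; 0; 0];
  [:: 0; 0; 0; 0; 0; 0; 0; 0; 0; 0; 0; 0; 0; 0; 0; 0; 0; 0; 0; 0; 1]].

Definition PL : seq (seq int) :=
 [:: [:: 3; (-18); (-4); (-2); 1; 1; (-3); 1; (-3); 0; 0; 0; 0; 0; (-6); 0; 0; 0; 0; 0; 0];
  [:: (-3); 18; 4; 1; (-2); 1; 2; (-1); 3; 0; 0; 0; 0; 0; 6; 0; 0; 0; 0; 0; 0];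
  [:: 3; (-16); (-3); (-1); 1; 0; (-3); 2; (-3); 0; 0; 0; 0; 0; (-6); 0; 0; 0; 0; 0; 0];
  [:: 0; (-1); 0; (-1); 1; 0; 0; (-1); 0; 0; 0; 0; 0; 0; 0; 0; 0; 0; 0; 0; 0];
  [:: 0; 0; 0; 0; 0; 0; 0; 0; 0; 0; 0; 0; 0; 0; 0; 0; 0; 0; (-1); 2; 0];
  [:: 0; 0; 0; 0; 0; 0; 0; 0; 0; 0; 0; 0; 0; 0; (-1); 0; 2; (-1); 0; 0; 0];
  [:: 0; 0; 0; 0; 0; 0; 0; 0; 0; 0; 0; 0; 0; 0; 0; 0; 0; (-1); 2; (-1); 0];
  [:: 0; 0; 0; 0; 0; 0; 0; 0; 0; 0; 0; 0; 0; 0; 0; (-1); (-1); 2; (-1); 0; 0];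
  [:: 0; 0; 0; 0; 0; 0; 0; 0; 0; 0; 0; 0; 0; 0; 0; 2; 0; (-1); 0; 0; 0];
  [:: 0; (-2); 0; 0; 0; 0; 0; 0; 0; 0; 0; 0; 0; 0; 0; (-1); 0; 0; 0; 0; 0];
  [:: (-2); 16; 3; 1; (-1); 0; 2; (-1); 2; 0; 0; 0; 0; 0; 5; 0; 0; 0; 0; 0; 0];
  [:: 3; (-20); (-5); (-2); 2; 0; (-3); 2; (-3); 0; 0; 0; 0; 0; (-6); 0; 0; 0; 0; 0; 0];
  [:: 0; 0; 0; 0; 0; 0; 0; 0; 0; 0; 0; 0; (-1); 2; 0; 0; 0; 0; 0; 0; 0];
  [:: 0; 0; 0; 0; 0; 0; 0; 0; 0; 2; 0; (-1); 0; 0; 0; 0; 0; 0; 0; 0; 0];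
  [:: 0; 0; 0; 0; 0; 0; 0; 0; 0; 0; 0; (-1); 2; (-1); 0; 0; 0; 0; 0; 0; 0];
  [:: 0; 0; 0; 0; 0; 0; 0; 0; 0; (-1); (-1); 2; (-1); 0; 0; 0; 0; 0; 0; 0; 0];
  [:: 0; 0; 0; 0; 0; 0; 0; 0; (-1); 0; 2; (-1); 0; 0; 0; 0; 0; 0; 0; 0; 0];
  [:: 0; 1; 0; 0; 0; 0; 0; 0; 2; 0; (-1); 0; 0; 0; 0; 0; 0; 0; 0; 0; 0];
  [:: (-2); 10; 3; 1; (-1); 0; 1; 0; 1; 0; 0; 0; 0; 0; 4; 0; 0; 0; 0; 0; 0];
  [:: 3; (-17); (-5); (-1); 2; 0; (-2); 0; (-3); 0; 0; 0; 0; 0; (-6); 0; 0; 0; 0; 0; 0];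
  [:: 0; 0; 0; 0; 0; 0; 0; 0; 0; 0; 0; 0; 0; 0; 0; 0; 0; 0; 0; 0; 2]].

Definition HL : seq (seq int) :=
 [:: [:: 0; 6; 0; 0; 0; 0; 0; 0; 0; 0; 0; 0; 0; 0; 0; 0; 0; 0; 0; 0; 0];
  [:: 6; 0; 0; 0; 0; 0; 0; 0; 0; 0; 0; 0; 0; 0; 0; 0; 0; 0; 0; 0; 0];
  [:: 0; 0; 8; 6; 10; 12; 8; 4; 0; 0; 0; 0; 0; 0; 0; 0; 0; 0; 0; 0; 0];
  [:: 0; 0; 6; 12; 12; 18; 12; 6; 0; 0; 0; 0; 0; 0; 0; 0; 0; 0; 0; 0; 0];
  [:: 0; 0; 10; 12; 20; 24; 16; 8; 0; 0; 0; 0; 0; 0; 0; 0; 0; 0; 0; 0; 0];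
  [:: 0; 0; 12; 18; 24; 36; 24; 12; 0; 0; 0; 0; 0; 0; 0; 0; 0; 0; 0; 0; 0];
  [:: 0; 0; 8; 12; 16; 24; 20; 10; 0; 0; 0; 0; 0; 0; 0; 0; 0; 0; 0; 0; 0];
  [:: 0; 0; 4; 6; 8; 12; 10; 8; 0; 0; 0; 0; 0; 0; 0; 0; 0; 0; 0; 0; 0];
  [:: 0; 0; 0; 0; 0; 0; 0; 0; 8; 6; 10; 12; 8; 4; 0; 0; 0; 0; 0; 0; 0];
  [:: 0; 0; 0; 0; 0; 0; 0; 0; 6; 12; 12; 18; 12; 6; 0; 0; 0; 0; 0; 0; 0];
  [:: 0; 0; 0; 0; 0; 0; 0; 0; 10; 12; 20; 24; 16; 8; 0; 0; 0; 0; 0; 0; 0];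
  [:: 0; 0; 0; 0; 0; 0; 0; 0; 12; 18; 24; 36; 24; 12; 0; 0; 0; 0; 0; 0; 0];
  [:: 0; 0; 0; 0; 0; 0; 0; 0; 8; 12; 16; 24; 20; 10; 0; 0; 0; 0; 0; 0; 0];
  [:: 0; 0; 0; 0; 0; 0; 0; 0; 4; 6; 8; 12; 10; 8; 0; 0; 0; 0; 0; 0; 0];
  [:: 0; 0; 0; 0; 0; 0; 0; 0; 0; 0; 0; 0; 0; 0; 8; 6; 10; 12; 8; 4; 0];
  [:: 0; 0; 0; 0; 0; 0; 0; 0; 0; 0; 0; 0; 0; 0; 6; 12; 12; 18; 12; 6; 0];
  [:: 0; 0; 0; 0; 0; 0; 0; 0; 0; 0; 0; 0; 0; 0; 10; 12; 20; 24; 16; 8; 0];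
  [:: 0; 0; 0; 0; 0; 0; 0; 0; 0; 0; 0; 0; 0; 0; 12; 18; 24; 36; 24; 12; 0];
  [:: 0; 0; 0; 0; 0; 0; 0; 0; 0; 0; 0; 0; 0; 0; 8; 12; 16; 24; 20; 10; 0];
  [:: 0; 0; 0; 0; 0; 0; 0; 0; 0; 0; 0; 0; 0; 0; 4; 6; 8; 12; 10; 8; 0];
  [:: 0; 0; 0; 0; 0; 0; 0; 0; 0; 0; 0; 0; 0; 0; 0; 0; 0; 0; 0; 0; 3]].

Definition AL : seq (seq int) :=
 [:: [:: 0; 6; 0; 0; 0; 0; 0; 0; 0; 0; 0; 0; 0; 0; 0; 0; 0; 0; 0; 0; 0];
  [:: 6; 0; 0; 0; 0; 0; 0; 0; 0; 0; 0; 0; 0; 0; 0; 0; 0; 0; 0; 0; 0];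
  [:: 0; 0; 4; 2; 0; 0; 0; 0; 0; 0; 0; 0; 0; 0; 0; 0; 0; 0; 0; 0; 0];
  [:: 0; 0; 2; 4; 0; 0; 0; 0; 0; 0; 0; 0; 0; 0; 0; 0; 0; 0; 0; 0; 0];
  [:: 0; 0; 0; 0; 24; 30; 42; 60; 48; 36; 24; 12; 0; 0; 0; 0; 0; 0; 0; 0; 0];
  [:: 0; 0; 0; 0; 30; 48; 60; 90; 72; 54; 36; 18; 0; 0; 0; 0; 0; 0; 0; 0; 0];
  [:: 0; 0; 0; 0; 42; 60; 84; 120; 96; 72; 48; 24; 0; 0; 0; 0; 0; 0; 0; 0; 0];
  [:: 0; 0; 0; 0; 60; 90; 120; 180; 144; 108; 72; 36; 0; 0; 0; 0; 0; 0; 0; 0; 0];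
  [:: 0; 0; 0; 0; 48; 72; 96; 144; 120; 90; 60; 30; 0; 0; 0; 0; 0; 0; 0; 0; 0];
  [:: 0; 0; 0; 0; 36; 54; 72; 108; 90; 72; 48; 24; 0; 0; 0; 0; 0; 0; 0; 0; 0];
  [:: 0; 0; 0; 0; 24; 36; 48; 72; 60; 48; 36; 18; 0; 0; 0; 0; 0; 0; 0; 0; 0];
  [:: 0; 0; 0; 0; 12; 18; 24; 36; 30; 24; 18; 12; 0; 0; 0; 0; 0; 0; 0; 0; 0];
  [:: 0; 0; 0; 0; 0; 0; 0; 0; 0; 0; 0; 0; 24; 30; 42; 60; 48; 36; 24; 12; 0];
  [:: 0; 0; 0; 0; 0; 0; 0; 0; 0; 0; 0; 0; 30; 48; 60; 90; 72; 54; 36; 18; 0];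
  [:: 0; 0; 0; 0; 0; 0; 0; 0; 0; 0; 0; 0; 42; 60; 84; 120; 96; 72; 48; 24; 0];
  [:: 0; 0; 0; 0; 0; 0; 0; 0; 0; 0; 0; 0; 60; 90; 120; 180; 144; 108; 72; 36; 0];
  [:: 0; 0; 0; 0; 0; 0; 0; 0; 0; 0; 0; 0; 48; 72; 96; 144; 120; 90; 60; 30; 0];
  [:: 0; 0; 0; 0; 0; 0; 0; 0; 0; 0; 0; 0; 36; 54; 72; 108; 90; 72; 48; 24; 0];
  [:: 0; 0; 0; 0; 0; 0; 0; 0; 0; 0; 0; 0; 24; 36; 48; 72; 60; 48; 36; 18; 0];
  [:: 0; 0; 0; 0; 0; 0; 0; 0; 0; 0; 0; 0; 12; 18; 24; 36; 30; 24; 18; 12; 0];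
  [:: 0; 0; 0; 0; 0; 0; 0; 0; 0; 0; 0; 0; 0; 0; 0; 0; 0; 0; 0; 0; 3]].

Definition XL : seq (seq int) :=
 [:: [:: 0; 1; 1; 2; 0; 0; 0; 0; 0; 0; 0; 0; 0; 0; 0; 0; 0; 0; 0; 0; 0];
  [:: 1; 0; 2; 1; 0; 0; 0; 0; 0; 0; 0; 0; 0; 0; 0; 0; 0; 0; 0; 0; 0];
  [:: 0; 0; 0; 2; 0; 0; 0; 0; 0; 0; 0; 0; 0; 0; 0; 0; 0; 0; 0; 0; 0];
  [:: 0; 0; 0; 0; 0; 0; 0; 0; 0; 0; 0; 0; 0; 0; 0; 0; 0; 0; 0; 0; 0];
  [:: 0; 0; 2; 1; 2; 1; 2; 2; 1; 0; 1; 2; 2; 1; 2; 2; 1; 0; 0; 0; 0];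
  [:: 0; 0; 0; 0; 1; 1; 2; 0; 0; 0; 0; 0; 1; 0; 2; 0; 1; 0; 0; 0; 0];
  [:: 0; 0; 1; 2; 2; 2; 1; 1; 2; 0; 2; 1; 2; 2; 1; 1; 2; 0; 0; 0; 0];
  [:: 0; 0; 0; 0; 2; 0; 1; 0; 0; 0; 0; 0; 2; 0; 1; 0; 0; 0; 0; 0; 0];
  [:: 0; 0; 2; 1; 1; 0; 2; 0; 1; 0; 1; 2; 1; 1; 2; 0; 0; 0; 0; 0; 0];
  [:: 0; 0; 1; 2; 0; 0; 0; 0; 0; 0; 2; 1; 0; 0; 0; 0; 0; 0; 0; 0; 0];
  [:: 0; 0; 1; 2; 1; 0; 2; 0; 1; 2; 0; 0; 0; 0; 0; 0; 0; 0; 0; 0; 0];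
  [:: 0; 0; 0; 0; 2; 0; 1; 0; 2; 1; 0; 2; 0; 0; 0; 0; 0; 0; 0; 0; 0];
  [:: 0; 0; 2; 1; 2; 1; 2; 2; 1; 0; 0; 0; 2; 1; 2; 2; 1; 0; 1; 2; 0];
  [:: 0; 0; 0; 0; 1; 0; 2; 0; 1; 0; 0; 0; 1; 1; 2; 0; 0; 0; 0; 0; 0];
  [:: 0; 0; 1; 2; 2; 2; 1; 1; 2; 0; 0; 0; 2; 2; 1; 1; 2; 0; 2; 1; 0];
  [:: 0; 0; 0; 0; 2; 0; 1; 0; 0; 0; 0; 0; 2; 0; 1; 0; 0; 0; 0; 0; 0];
  [:: 0; 0; 2; 1; 1; 1; 2; 0; 0; 0; 0; 0; 1; 0; 2; 0; 1; 0; 1; 2; 0];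
  [:: 0; 0; 1; 2; 0; 0; 0; 0; 0; 0; 0; 0; 0; 0; 0; 0; 0; 0; 2; 1; 0];
  [:: 0; 0; 1; 2; 0; 0; 0; 0; 0; 0; 0; 0; 1; 0; 2; 0; 1; 2; 0; 0; 0];
  [:: 0; 0; 0; 0; 0; 0; 0; 0; 0; 0; 0; 0; 2; 0; 1; 0; 2; 1; 0; 2; 0];
  [:: 0; 0; 0; 0; 0; 0; 0; 0; 0; 0; 0; 0; 0; 0; 0; 0; 0; 0; 0; 0; 2]].

Definition YL : seq (seq int) :=
 [:: [:: (-5); 4; 2; 1; (-2); (-3); (-4); (-6); (-5); (-4); (-4); 0; (-2); (-3); (-4); (-6); (-5); (-4); (-4); 0; 0];
  [:: 4; (-5); (-3); (-2); 2; 3; 4; 6; 5; 4; 4; 0; 2; 3; 4; 6; 5; 4; 4; 0; 0];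
  [:: (-4); 4; 2; 0; (-2); (-3); (-4); (-6); (-5); (-4); (-4); 0; (-2); (-3); (-4); (-6); (-5); (-4); (-4); 0; 0];
  [:: 0; 0; 0; 0; 0; 0; 0; 0; 0; 0; 0; 0; 0; 0; 0; 0; 0; 0; 0; 0; 0];
  [:: 0; 0; (-1); 0; (-1); 0; (-1); (-1); 0; 0; 0; (-1); (-1); 0; (-1); (-1); 0; 0; 0; 0; 0];
  [:: 0; 0; 0; 0; 0; (-1); (-1); 0; 0; 0; 0; 0; 0; 0; (-1); 0; (-1); 0; 0; 0; 0];
  [:: 0; 0; 0; (-1); 0; (-1); 0; 0; (-1); 0; (-1); 0; 0; (-1); 0; 0; (-1); 0; 0; 0; 0];
  [:: 0; 0; 1; 1; 0; 1; 1; 0; 1; 0; 1; 1; 0; 1; 1; 0; 1; 0; 0; 0; 0];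
  [:: 0; 0; (-1); 0; 0; 0; (-1); 0; (-1); 0; 0; (-1); 0; (-1); (-1); 0; 0; 0; 0; 0; 0];
  [:: (-1); 1; 1; 0; 0; (-1); 0; (-2); (-1); (-1); (-2); 0; 0; 0; 0; (-1); (-1); (-1); (-1); 0; 0];
  [:: 4; (-4); (-3); (-2); 2; 3; 3; 6; 5; 3; 4; 1; 2; 3; 4; 6; 5; 4; 4; 0; 0];
  [:: (-4); 4; 3; 2; (-3); (-3); (-4); (-6); (-6); (-4); (-4); (-2); (-2); (-3); (-4); (-6); (-5); (-4); (-4); 0; 0];
  [:: 0; 0; (-1); 0; (-1); 0; (-1); (-1); 0; 0; 0; 0; (-1); 0; (-1); (-1); 0; 0; 0; (-1); 0];
  [:: 0; 0; 0; 0; 0; 0; (-1); 0; (-1); 0; 0; 0; 0; (-1); (-1); 0; 0; 0; 0; 0; 0];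
  [:: 0; 0; 0; (-1); 0; (-1); 0; 0; (-1); 0; 0; 0; 0; (-1); 0; 0; (-1); 0; (-1); 0; 0];
  [:: 0; 0; 1; 1; 0; 1; 1; 0; 1; 0; 0; 0; 0; 1; 1; 0; 1; 0; 1; 1; 0];
  [:: 0; 0; (-1); 0; 0; (-1); (-1); 0; 0; 0; 0; 0; 0; 0; (-1); 0; (-1); 0; 0; (-1); 0];
  [:: (-1); 1; 1; 0; 0; 0; 0; (-1); (-1); (-1); (-1); 0; 0; (-1); 0; (-2); (-1); (-1); (-2); 0; 0];
  [:: 4; (-4); (-3); (-2); 2; 3; 4; 6; 5; 4; 4; 0; 2; 3; 3; 6; 5; 3; 4; 1; 0];
  [:: (-4); 4; 3; 2; (-2); (-3); (-4); (-6); (-5); (-4); (-4); 0; (-3); (-3); (-4); (-6); (-6); (-4); (-4); (-2); 0];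
  [:: 0; 0; 0; 0; 0; 0; 0; 0; 0; 0; 0; 0; 0; 0; 0; 0; 0; 0; 0; 0; (-2)]].

Definition PiL : seq (seq int) :=
 [:: [:: 1; 0; 0; 0; 0; 0; 0; 0; 0; 0; 0; 0; 0; 0; 0; 0; 0; 0; 0; 0; 0];
  [:: 0; 1; 0; 0; 0; 0; 0; 0; 0; 0; 0; 0; 0; 0; 0; 0; 0; 0; 0; 0; 0];
  [:: 0; 0; 1; 0; 0; 0; 0; 0; 0; 0; 0; 0; 0; 0; 0; 0; 0; 0; 0; 0; 0];
  [:: 0; 0; 0; 1; 0; 0; 0; 0; 0; 0; 0; 0; 0; 0; 0; 0; 0; 0; 0; 0; 0];
  [:: 0; 0; 0; 0; 1; 0; 0; 0; 0; 0; 0; 0; 0; 0; 0; 0; 0; 0; 0; 0; 0];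
  [:: 0; 0; 0; 0; 0; 1; 0; 0; 0; 0; 0; 0; 0; 0; 0; 0; 0; 0; 0; 0; 0];
  [:: 0; 0; 0; 0; 0; 0; 1; 0; 0; 0; 0; 0; 0; 0; 0; 0; 0; 0; 0; 0; 0];
  [:: 0; 0; 0; 0; 0; 0; 0; 1; 0; 0; 0; 0; 0; 0; 0; 0; 0; 0; 0; 0; 0];
  [:: 0; 0; 0; 0; 0; 0; 0; 0; 0; 0; 0; 0; 0; 0; 1; 0; 0; 0; 0; 0; 0];
  [:: 0; 0; 0; 0; 0; 0; 0; 0; 0; 0; 0; 0; 0; 0; 0; 1; 0; 0; 0; 0; 0];
  [:: 0; 0; 0; 0; 0; 0; 0; 0; 0; 0; 0; 0; 0; 0; 0; 0; 1; 0; 0; 0; 0];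
  [:: 0; 0; 0; 0; 0; 0; 0; 0; 0; 0; 0; 0; 0; 0; 0; 0; 0; 1; 0; 0; 0];
  [:: 0; 0; 0; 0; 0; 0; 0; 0; 0; 0; 0; 0; 0; 0; 0; 0; 0; 0; 1; 0; 0];
  [:: 0; 0; 0; 0; 0; 0; 0; 0; 0; 0; 0; 0; 0; 0; 0; 0; 0; 0; 0; 1; 0];
  [:: 0; 0; 0; 0; 0; 0; 0; 0; 1; 0; 0; 0; 0; 0; 0; 0; 0; 0; 0; 0; 0];
  [:: 0; 0; 0; 0; 0; 0; 0; 0; 0; 1; 0; 0; 0; 0; 0; 0; 0; 0; 0; 0; 0];
  [:: 0; 0; 0; 0; 0; 0; 0; 0; 0; 0; 1; 0; 0; 0; 0; 0; 0; 0; 0; 0; 0];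
  [:: 0; 0; 0; 0; 0; 0; 0; 0; 0; 0; 0; 1; 0; 0; 0; 0; 0; 0; 0; 0; 0];
  [:: 0; 0; 0; 0; 0; 0; 0; 0; 0; 0; 0; 0; 1; 0; 0; 0; 0; 0; 0; 0; 0];
  [:: 0; 0; 0; 0; 0; 0; 0; 0; 0; 0; 0; 0; 0; 1; 0; 0; 0; 0; 0; 0; 0];
  [:: 0; 0; 0; 0; 0; 0; 0; 0; 0; 0; 0; 0; 0; 0; 0; 0; 0; 0; 0; 0; 1]].

Definition GsL : seq (seq int) :=
 [:: [:: 0; 1; 0; 0; 0; 0; 0; 0; 0; 0; 0; 0; 0; 0; 0; 0; 0; 0; 0; 0; 0];
  [:: 1; 0; 0; 0; 0; 0; 0; 0; 0; 0; 0; 0; 0; 0; 0; 0; 0; 0; 0; 0; 0];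
  [:: 0; 0; 2; 0; (-1); 0; 0; 0; 0; 0; 0; 0; 0; 0; 0; 0; 0; 0; 0; 0; 0];
  [:: 0; 0; 0; 2; 0; (-1); 0; 0; 0; 0; 0; 0; 0; 0; 0; 0; 0; 0; 0; 0; 0];
  [:: 0; 0; (-1); 0; 2; (-1); 0; 0; 0; 0; 0; 0; 0; 0; 0; 0; 0; 0; 0; 0; 0];
  [:: 0; 0; 0; (-1); (-1); 2; (-1); 0; 0; 0; 0; 0; 0; 0; 0; 0; 0; 0; 0; 0; 0];
  [:: 0; 0; 0; 0; 0; (-1); 2; (-1); 0; 0; 0; 0; 0; 0; 0; 0; 0; 0; 0; 0; 0];
  [:: 0; 0; 0; 0; 0; 0; (-1); 2; 0; 0; 0; 0; 0; 0; 0; 0; 0; 0; 0; 0; 0];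
  [:: 0; 0; 0; 0; 0; 0; 0; 0; 2; 0; (-1); 0; 0; 0; 0; 0; 0; 0; 0; 0; 0];
  [:: 0; 0; 0; 0; 0; 0; 0; 0; 0; 2; 0; (-1); 0; 0; 0; 0; 0; 0; 0; 0; 0];
  [:: 0; 0; 0; 0; 0; 0; 0; 0; (-1); 0; 2; (-1); 0; 0; 0; 0; 0; 0; 0; 0; 0];
  [:: 0; 0; 0; 0; 0; 0; 0; 0; 0; (-1); (-1); 2; (-1); 0; 0; 0; 0; 0; 0; 0; 0];
  [:: 0; 0; 0; 0; 0; 0; 0; 0; 0; 0; 0; (-1); 2; (-1); 0; 0; 0; 0; 0; 0; 0];
  [:: 0; 0; 0; 0; 0; 0; 0; 0; 0; 0; 0; 0; (-1); 2; 0; 0; 0; 0; 0; 0; 0];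
  [:: 0; 0; 0; 0; 0; 0; 0; 0; 0; 0; 0; 0; 0; 0; 2; 0; (-1); 0; 0; 0; 0];
  [:: 0; 0; 0; 0; 0; 0; 0; 0; 0; 0; 0; 0; 0; 0; 0; 2; 0; (-1); 0; 0; 0];
  [:: 0; 0; 0; 0; 0; 0; 0; 0; 0; 0; 0; 0; 0; 0; (-1); 0; 2; (-1); 0; 0; 0];
  [:: 0; 0; 0; 0; 0; 0; 0; 0; 0; 0; 0; 0; 0; 0; 0; (-1); (-1); 2; (-1); 0; 0];
  [:: 0; 0; 0; 0; 0; 0; 0; 0; 0; 0; 0; 0; 0; 0; 0; 0; 0; (-1); 2; (-1); 0];
  [:: 0; 0; 0; 0; 0; 0; 0; 0; 0; 0; 0; 0; 0; 0; 0; 0; 0; 0; (-1); 2; 0];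
  [:: 0; 0; 0; 0; 0; 0; 0; 0; 0; 0; 0; 0; 0; 0; 0; 0; 0; 0; 0; 0; 2]].

Definition fnat (l : seq (seq int)) (i j : nat) : int := nth 0 (nth [::] l i) j.
Definition mkF (f : nat -> nat -> int) : 'M[int]_rkL := \matrix_(i < rkL, j < rkL) f i j.

Lemma sumL (F : nat -> int) :
  \sum_(k < rkL) F k = foldr (fun k acc => F k + acc) 0 (iota 0 rkL).
Proof. by rewrite -(big_mkord xpredT) /index_iota subn0 unlock. Qed.

Definition mulE (fa fb : nat -> nat -> int) i j :=
  foldr (fun k acc => fa i k * fb k j + acc) 0 (iota 0 rkL).
Definition check_eq (f h : nat -> nat -> int) :=
  all (fun i => all (fun j => f i j == h i j) (iota 0 rkL)) (iota 0 rkL).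

Lemma mkF_eq f h : check_eq f h -> mkF f = mkF h.
Proof.
move=> /allP H; apply/matrixP => i j; rewrite !mxE.
have := H i; rewrite mem_iota ltn_ord => /(_ isT) /allP /(_ j).
by rewrite mem_iota ltn_ord => /(_ isT) /eqP.
Qed.

Lemma mulF fa fb : mkF fa *m mkF fb = mkF (mulE fa fb).
Proof.
apply/matrixP => i j; rewrite !mxE.
rewrite (eq_bigr (fun k : 'I_rkL => fa i k * fb k j)); last by move=> k _; rewrite !mxE.
by rewrite (sumL (fun k => fa i k * fb k j)).
Qed.

Lemma trF f : (mkF f)^T = mkF (fun i j => f j i).
Proof. by apply/matrixP => i j; rewrite !mxE. Qed.

Lemma oneF : (1%:M : 'M[int]_rkL) = mkF (fun i j => (i == j)%:R).
Proof. by apply/matrixP => i j; rewrite !mxE. Qed.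

Lemma gramF : gramL = mkF gram_entry.
Proof. by []. Qed.

Definition gm := mkF (fnat gL).
Definition Sm := mkF (fnat SL).
Definition Pm := mkF (fnat PL).
Definition Hm := mkF (fnat HL).
Definition Am := mkF (fnat AL).
Definition Xm := mkF (fnat XL).
Definition Ym := mkF (fnat YL).
Definition Pim := mkF (fnat PiL).
Definition Gsm := mkF (fnat GsL).

Lemma F1 : gm *m gm = 1%:M.
Proof. rewrite /gm mulF oneF; apply: mkF_eq; by vm_compute. Qed.

Lemma F2 : gm *m gramL *m gm^T = gramL.
Proof. rewrite /gm gramF trF !mulF; apply: mkF_eq; by vm_compute. Qed.

Lemma F3 : gramL *m Sm^T = Pm.
Proof. rewrite /Sm /Pm gramF trF !mulF; apply: mkF_eq; by vm_compute. Qed.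

Lemma F4 : Pm *m Hm *m Pm^T = 6 *: gramL.
Proof.
have -> : 6 *: gramL = mkF (fun i j => 6 * gram_entry i j).
  by apply/matrixP => i j; rewrite !mxE.
rewrite /Pm /Hm trF !mulF; apply: mkF_eq; by vm_compute.
Qed.

Lemma F5 : Sm *m gramL *m Sm^T = Gsm.
Proof. rewrite /Sm /Gsm gramF trF !mulF; apply: mkF_eq; by vm_compute. Qed.

Lemma F6 : Sm *m gm = - (Pim *m Sm).
Proof.
have -> : - (Pim *m Sm) = mkF (fun i j => - mulE (fnat PiL) (fnat SL) i j).
  by rewrite /Pim /Sm mulF; apply/matrixP => i j; rewrite !mxE.
rewrite /Sm /gm mulF; apply: mkF_eq; by vm_compute.
Qed.

Lemma F7 : gm - 1%:M = gramL *m Xm + 3 *: Ym.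
Proof.
have -> : gm - 1%:M = mkF (fun i j => fnat gL i j - (i == j)%:R).
  by apply/matrixP => i j; rewrite !mxE.
have -> : gramL *m Xm + 3 *: Ym = mkF (fun i j => mulE gram_entry (fnat XL) i j + 3 * fnat YL i j).
  by rewrite gramF /Xm mulF; apply/matrixP => i j; rewrite !mxE.
apply: mkF_eq; by vm_compute.
Qed.

Lemma F8 : gramL *m Am = 6%:M.
Proof.
have -> : (6%:M : 'M[int]_rkL) = mkF (fun i j => 6 * (i == j)%:R).
  by apply/matrixP => i j; rewrite !mxE mulr_natr.
rewrite gramF /Am mulF; apply: mkF_eq; by vm_compute.
Qed.


Definition rf (r : 'rV[int]_rkL) (k : nat) : int := r 0 (inord k).

Lemma rfE (r : 'rV[int]_rkL) (i : 'I_rkL) : r 0 i = rf r i.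
Proof. by rewrite /rf inord_val. Qed.

Lemma quadF (r : 'rV[int]_rkL) f :
  (r *m mkF f *m r^T) 0 0 =
  foldr (fun i acc => foldr (fun j acc' => rf r j * f j i + acc') 0 (iota 0 rkL) * rf r i + acc)
        0 (iota 0 rkL).
Proof.
rewrite !mxE.
rewrite (eq_bigr (fun i : 'I_rkL => foldr (fun j acc' => rf r j * f j i + acc') 0 (iota 0 rkL) * rf r i)).
  by rewrite (sumL (fun i => foldr (fun j acc' => rf r j * f j i + acc') 0 (iota 0 rkL) * rf r i)).
move=> i _; rewrite !mxE rfE; congr (_ * _).
rewrite (eq_bigr (fun j : 'I_rkL => rf r j * f j i)); last by move=> j _; rewrite !mxE rfE.
by rewrite (sumL (fun j => rf r j * f j i)).
Qed.

Lemma expandH (p : 'rV[int]_rkL) :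
  (p *m Hm *m p^T) 0 0 = 12 * rf p 0 * rf p 1 +
    Psi (rf p 2) (rf p 3) (rf p 4) (rf p 5) (rf p 6) (rf p 7)
        (rf p 8) (rf p 9) (rf p 10) (rf p 11) (rf p 12) (rf p 13)
        (rf p 14) (rf p 15) (rf p 16) (rf p 17) (rf p 18) (rf p 19) (rf p 20).
Proof.
rewrite /Hm quadF.
cbv [foldr iota fnat nth HL rkL].
rewrite /Psi /qf.
Time ring.
Qed.

Definition xcl : seq int :=
  [:: -4 * Dc; Dc; Wc; Wc^+2; Wc^+3; Wc^+4; Wc^+5; Wc^+6;
      Wc^+7; Wc^+8; Wc^+9; Wc^+10; Wc^+11; Wc^+12;
      Wc^+7; Wc^+8; Wc^+9; Wc^+10; Wc^+11; Wc^+12; 1].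
Definition xcf (i : nat) : int := nth 0 xcl i.
Definition xc : 'rV[int]_rkL := \row_(j < rkL) xcf j.
Definition xv : 'rV[int]_rkL := xc *m Sm.

Lemma pairF (r : 'rV[int]_rkL) :
  (r *m xc^T) 0 0 = foldr (fun i acc => rf r i * xcf i + acc) 0 (iota 0 rkL).
Proof.
rewrite !mxE.
rewrite (eq_bigr (fun i : 'I_rkL => rf r i * xcf i)); last by move=> i _; rewrite !mxE rfE.
by rewrite (sumL (fun i => rf r i * xcf i)).
Qed.

Lemma pair_xv (v : 'rV[int]_rkL) :
  bL v xv = - 4 * Dc * rf (v *m Pm) 0 + Dc * rf (v *m Pm) 1 +
   ell Wc (rf (v *m Pm) 2) (rf (v *m Pm) 3) (rf (v *m Pm) 4) (rf (v *m Pm) 5) (rf (v *m Pm) 6) (rf (v *m Pm) 7)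
        (rf (v *m Pm) 8) (rf (v *m Pm) 9) (rf (v *m Pm) 10) (rf (v *m Pm) 11) (rf (v *m Pm) 12) (rf (v *m Pm) 13)
        (rf (v *m Pm) 14) (rf (v *m Pm) 15) (rf (v *m Pm) 16) (rf (v *m Pm) 17) (rf (v *m Pm) 18) (rf (v *m Pm) 19)
        (rf (v *m Pm) 20).
Proof.
rewrite /bL /xv trmx_mul -!mulmxA (mulmxA gramL) F3 mulmxA pairF.
set p := v *m Pm.
cbv [foldr iota xcf xcl nth rkL].
rewrite /ell.
Time ring.
Qed.

Lemma rfxc k : (k < rkL)%N -> rf xc k = xcf k.
Proof. by move=> hk; rewrite /rf /xc mxE inordK. Qed.

Lemma norm_xv : 6 * bL xv xv = - 48 * Dc ^+ 2 + PsiN Wc.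
Proof.
have E : xv *m gramL *m xv^T = xc *m Gsm *m xc^T by rewrite /xv trmx_mul -F5 !mulmxA.
rewrite /bL E /Gsm quadF.
cbv [foldr iota fnat nth GsL rkL].
rewrite !rfxc; [idtac | by [] ..].
cbv [xcf xcl nth].
rewrite /PsiN.
move: Wc Dc => W D.
rewrite /Psi /qf /cart1 /cart2 /cart3 /cart4 /cart5 /cart6.
Time ring.
Qed.

Lemma six_norm (v : 'rV[int]_rkL) : 6 * bL v v = ((v *m Pm) *m Hm *m (v *m Pm)^T) 0 0.
Proof.
have -> : v *m Pm *m Hm *m (v *m Pm)^T = v *m (Pm *m Hm *m Pm^T) *m v^T.
  by rewrite trmx_mul !mulmxA.
by rewrite F4 -scalemxAr -scalemxAl mxE.
Qed.

Lemma nowall (v : 'rV[int]_rkL) k : (k = 2 \/ k = 6) -> bL v v = k -> bL v xv <> 0.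
Proof.
move=> hk hv h0.
have h6 := six_norm v. rewrite hv expandH in h6.
rewrite pair_xv in h0.
exact: (core _ _ _ _ _ _ _ _ _ _ _ _ _ _ _ _ _ _ _ _ _ _ hk h6 h0).
Qed.

Lemma xc_inv : xc *m Pim = xc.
Proof.
apply/rowP => j; rewrite !mxE.
rewrite (eq_bigr (fun k : 'I_rkL => xcf k * fnat PiL k j)); last by move=> k _; rewrite !mxE.
rewrite (sumL (fun k => xcf k * fnat PiL k j)).
case: j => j hj /=.
do 21! (case: j hj => [|j] hj; first by cbv [foldr iota fnat nth PiL rkL xcf xcl]; ring).
by [].
Qed.

Lemma xv_g : xv *m gm = - xv.
Proof. by rewrite /xv -mulmxA F6 mulmxN mulmxA xc_inv. Qed.

Lemma xv_neg : bL xv xv < 0.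
Proof.
have h := norm_xv. have [P0 P1] := Psin_small. have D0 := Dc_gt0.
have : 6 * bL xv xv < 0.
  rewrite h. move: P1 D0; move: (PsiN Wc) (Dc) => P D; nia.
by rewrite pmulr_rlt0.
Qed.


Lemma isintE (q : rat) : is_int_rat q = (q \is a Num.int).
Proof. by rewrite Qint_def. Qed.

Lemma inL_mul (r : 'rV[rat]_rkL) (M : 'M[int]_rkL) :
  in_L r -> in_L (r *m map_mx intr M).
Proof.
move=> hr i; rewrite isintE !mxE; apply: rpred_sum => j _.
by rewrite mxE; apply: rpredM; [rewrite -isintE; apply: hr | apply: intr_int].
Qed.

Lemma inL_add (r s : 'rV[rat]_rkL) : in_L r -> in_L s -> in_L (r + s).
Proof. by move=> hr hs i; rewrite isintE mxE rpredD // -isintE. Qed.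

Lemma three_q (q : rat) (k : nat) :
  (6 * q) \is a Num.int -> (3%:R ^+ k * q) \is a Num.int -> (3 * q) \is a Num.int.
Proof.
move=> h6 hk.
case: k hk => [|k] hk.
  by rewrite expr0 mul1r in hk; rewrite rpredM // (intr_int _ 3).
have ho : odd (3 ^ k) by rewrite oddX orbT.
set m := (3 ^ k)./2.
have e3 : (3 ^ k)%N = (m.*2).+1 by rewrite /m -[in LHS](odd_double_half (3 ^ k)) ho add1n.
have -> : 3 * q = 3%:R ^+ k.+1 * q - m%:R * (6 * q).
  rewrite exprS (_ : (3%:R : rat) ^+ k = (3 ^ k)%N%:R); last by rewrite natrX.
  have e3' : ((m.*2).+1%:R : rat) = 2 * m%:R + 1.
    by rewrite -addn1 -mul2n natrD natrM.
  rewrite e3 e3'; ring.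
apply: rpredB => //; apply: rpredM => //; exact: (intr_int _ m).
Qed.

Lemma Z3g : Z3_direct gm.
Proof.
move=> y hy [k hk].
have hyG : in_L (y *m map_mx intr gramL) := hy.
have h6 : in_L ((6 : rat) *: y).
  have := inL_mul _ Am hyG.
  rewrite -mulmxA -map_mxM F8 map_scalar_mx mul_mx_scalar.
  by move=> h i; have := h i; rewrite !mxE.
have h3 : in_L ((3 : rat) *: y).
  move=> i; rewrite isintE mxE; apply: (three_q _ k).
    by have := h6 i; rewrite isintE mxE.
  by have := hk i; rewrite isintE mxE.
have e : y *m map_mx intr gm - y =
    (y *m map_mx intr gramL) *m map_mx intr Xm + ((3 : rat) *: y) *m map_mx intr Ym.
  have -> : y *m map_mx intr gm - y = y *m map_mx intr (gm - 1%:M).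
    by rewrite map_mxB map_mx1 mulmxBr mulmx1.
  rewrite F7 map_mxD map_mxM mulmxDr mulmxA; congr (_ + _).
  by rewrite map_mxZ -scalemxAr scalemxAl.
rewrite e; apply: inL_add; [exact: inL_mul _ _ hyG | exact: inL_mul _ _ h3].
Qed.

Local Open Scope classical_set_scope.

Lemma image_closure_sub (T U : topologicalType) (f : T -> U) (A : set T) :
  continuous f -> f @` closure A `<=` closure (f @` A).
Proof.
move=> fc _ [x clx <-] B hB.
have hx : nbhs x (f @^-1` B) := fc x B hB.
have [y [Ay By]] := clx _ hx.
by exists (f y); split => //; exists y.
Qed.

Lemma mulmx_continuous (R : realType) (n : nat) (M : 'M[R]_n) :
  continuous (fun y : 'rV[R]_n => y *m M).
Proof.
have E : (fun y : 'rV[R]_n => y *m M) = (fun y => \sum_(k <- index_enum 'I_n) y 0 k *: row k M).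
  by apply: funext => y; rewrite mulmx_sum_row.
rewrite E; elim: (index_enum 'I_n) => [|k s IH] y.
  rewrite (_ : (fun y0 : 'rV[R]_n => \sum_(k <- [::]) y0 0 k *: row k M) = fun=> 0).
    exact: cst_continuous.
  by apply: funext => z; rewrite big_nil.
have hk : continuous (fun y0 : 'rV[R]_n => y0 0 k *: row k M).
  by move=> z; apply: continuousZr_tmp; exact: coord_continuous.
rewrite (_ : (fun y0 : 'rV[R]_n => \sum_(j <- k :: s) y0 0 j *: row j M) =
  (fun y0 => y0 0 k *: row k M + \sum_(j <- s) y0 0 j *: row j M)).
  exact: (@continuousD R _ _ (fun y0 : 'rV[R]_n => y0 0 k *: row k M)
     (fun y0 : 'rV[R]_n => \sum_(j <- s) y0 0 j *: row j M) y (hk y) (IH y)).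
by apply: funext => z; rewrite big_cons.
Qed.

Local Open Scope classical_set_scope.

Section Main.
Variable R : realType.

Definition mR (v : 'rV[int]_rkL) : 'rV[R]_rkL := map_mx intr v.
Definition gR : 'M[R]_rkL := map_mx intr gm.
Definition hR (y : 'rV[R]_rkL) : 'rV[R]_rkL := - (y *m gR).

Lemma bR_map v w : bR (mR v) (mR w) = (bL v w)%:~R.
Proof. by rewrite /bR /bL /mR map_trmx -!map_mxM mxE. Qed.

Lemma GgT : gramL *m gm^T = gm *m gramL.
Proof. by rewrite -[LHS]mul1mx -F1 -mulmxA (mulmxA gm gramL) F2. Qed.

Lemma bR_act (v : 'rV[int]_rkL) y : bR (mR v) (y *m gR) = bR (mR (v *m gm)) y.
Proof.
rewrite /bR /mR /gR trmx_mul ?mulmxA map_trmx -!map_mxM.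
by rewrite -(mulmxA v) GgT mulmxA.
Qed.

Lemma bL_act_l (v w : 'rV[int]_rkL) : bL (v *m gm) w = bL v (w *m gm).
Proof. by rewrite /bL trmx_mul -(mulmxA v) -GgT !mulmxA. Qed.

Lemma bL_act (v : 'rV[int]_rkL) : bL (v *m gm) (v *m gm) = bL v v.
Proof.
rewrite /bL trmx_mul.
have -> : v *m gm *m gramL *m (gm^T *m v^T) = v *m (gm *m gramL *m gm^T) *m v^T.
  by rewrite !mulmxA.
by rewrite F2.
Qed.

Lemma Vk_act k v : Vk k v -> Vk k (v *m gm).
Proof.
move=> [h1 h2]; split; first by rewrite bL_act.
by move=> w; rewrite bL_act_l.
Qed.

Lemma bR_oppr (x y : 'rV[R]_rkL) : bR x (- y) = - bR x y.
Proof. by rewrite /bR linearN /= mulmxN mxE. Qed.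

Lemma bR_oppl (x y : 'rV[R]_rkL) : bR (- x) y = - bR x y.
Proof. by rewrite /bR mulNmx mulNmx mxE. Qed.

Lemma gRgR : gR *m gR = 1%:M.
Proof. by rewrite /gR -map_mxM F1 map_mx1. Qed.

Lemma hR_inv (y : 'rV[R]_rkL) : hR (hR y) = y.
Proof. by rewrite /hR mulNmx opprK -mulmxA gRgR mulmx1. Qed.

Lemma bR_gg (y : 'rV[R]_rkL) : bR (y *m gR) (y *m gR) = bR y y.
Proof.
rewrite /bR trmx_mul.
have -> : y *m gR *m map_mx intr gramL *m (gR^T *m y^T) =
  y *m (gR *m map_mx intr gramL *m gR^T) *m y^T by rewrite !mulmxA.
by rewrite /gR map_trmx -!map_mxM F2.
Qed.

Lemma negcone_h (y : 'rV[R]_rkL) : @negcone R y -> @negcone R (hR y).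
Proof. by rewrite /negcone /= /hR bR_oppl bR_oppr opprK bR_gg. Qed.

Lemma walls_h (y : 'rV[R]_rkL) : @walls R y -> @walls R (hR y).
Proof.
move=> [v [hv h0]]; exists (v *m gm); split.
  by case: hv => hv; [left|right]; apply: Vk_act.
rewrite /hR bR_oppr bR_act -mulmxA F1 mulmx1.
by rewrite h0 oppr0.
Qed.

Lemma hR_cont : continuous hR.
Proof. have -> : hR = (fun y => y *m (- gR)) by apply: funext => z; rewrite /hR mulmxN. exact: mulmx_continuous. Qed.

Definition xR : 'rV[R]_rkL := mR xv.

Lemma hR_xR : hR xR = xR.
Proof. by rewrite /hR /xR /mR /gR -map_mxM xv_g map_mxN opprK. Qed.

Lemma xR_A : (@negcone R `\` @walls R) xR.
Proof.
split.
  rewrite /negcone /= /xR bR_map ltrz0; exact: xv_neg.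
move=> [v [hv h0]].
rewrite /xR bR_map in h0.
move/eqP: h0; rewrite intr_eq0 => /eqP h0.
have hk : bL v v = 2 \/ bL v v = 6 by case: hv => [[h _]|[h _]]; [left|right].
exact: (nowall v (bL v v) hk erefl h0).
Qed.

Definition Acomp := (@negcone R `\` @walls R).
Definition Cc := connected_component Acomp xR.

Lemma hR_A y : Acomp y -> Acomp (hR y).
Proof.
move=> [hn hw]; split; first exact: negcone_h.
by move=> /walls_h; rewrite hR_inv.
Qed.

Lemma hC : hR @` Cc `<=` Cc.
Proof.
apply: connected_component_max.
- by exists xR; [exact: connected_component_refl xR_A | exact: hR_xR].
- move=> _ [y Cy <-]; apply: hR_A; exact: (connected_component_sub Cy).
- apply: connected_continuous_connected; first exact: component_connected.
  exact: continuous_subspaceT hR_cont.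
Qed.

Lemma hP : hR @` lift_cell Cc `<=` lift_cell Cc.
Proof.
move=> _ [y [cly ny] <-]; split; last exact: negcone_h.
apply: (closureS hC); apply: image_closure_sub hR_cont _ _.
by exists y.
Qed.

Lemma act_eq : act_R gm (lift_cell Cc) = neg_set (lift_cell Cc).
Proof.
apply/seteqP; split.
- move=> _ [y Py <-]; exists (hR y); first by apply: hP; exists y.
  by rewrite /hR opprK.
- move=> _ [y Py <-]; exists (hR y); first by apply: hP; exists y.
  by rewrite /hR mulNmx -mulmxA gRgR mulmx1.
Qed.

Lemma act_neg : act_R gm (neg_set (lift_cell Cc)) = lift_cell Cc.
Proof.
apply/seteqP; split.
- move=> _ [_ [y Py <-] <-]; rewrite mulNmx.
  by apply: hP; exists y.
- move=> z Pz; exists (- hR z).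
    by exists (hR z) => //; apply: hP; exists z.
  rewrite mulNmx; exact: hR_inv.
Qed.

Lemma main_res : exists C : set 'rV[R]_rkL, is_chamber C /\
  exists g : 'M[int]_rkL,
    [/\ isAutL g,
        act_R g (lift_cell C `|` neg_set (lift_cell C)) =
          lift_cell C `|` neg_set (lift_cell C),
        act_R g (lift_cell C) = neg_set (lift_cell C)
      & Z3_direct g].
Proof.
exists Cc; split; first by exists xR; [exact: xR_A|].
exists gm; split.
- split; [exact: (mulmx1_unit F1).1 | exact: F2].
- by rewrite /act_R image_setU -/(act_R gm _) -/(act_R gm _) act_eq act_neg setUC.
- exact: act_eq.
- exact: Z3g.
Qed.

End Main.

Theorem corollary7p7p2 (R : realType) :
  exists C : set 'rV[R]_rkL, is_chamber C /\
  exists g : 'M[int]_rkL,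
    [/\ isAutL g,
        (* g(P) = P *)
        act_R g (lift_cell C `|` neg_set (lift_cell C)) =
          lift_cell C `|` neg_set (lift_cell C),
        (* P-reversing: g(P#) = -P# *)
        act_R g (lift_cell C) = neg_set (lift_cell C)
      & Z3_direct g].
Proof. exact: main_res. Qed.
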